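(* Let $L\mathfrak{g}^{\sigma^*}$, $\widetilde G$ and its coadjoint action $\mathrm{Ad}^*_{\widetilde G}$ be as in the context. For integers $m\ge 0$ and $p\ge1$ let $$\widetilde{\mathfrak g}^*_{(m,p)}=\Big\{X\in L\mathfrak{g}^{\sigma^*}\ :\ X(z)=\sum_{j=-m}^{p}X_jz^j\Big\}.$$ Then $\widetilde{\mathfrak g}^*_{(m,p)}$ is invariant under $\mathrm{Ad}^*_{\widetilde G}(g)$ for every $g\in\widetilde G$.
   Context: $LG$ is the group of smooth loops $g:S^1\to GL(n,\mathbb{C})$ with $\overline{g(z)}=g(\bar z)$; $LG^{\Sigma}=\{g\in LG: g(z)g(-z)^T=I\}$. $LG^{\Sigma}_+$ (resp. $LG^{\Sigma}_-$) is the subgroup of loops in $LG^{\Sigma}$ extending analytically (as invertible matrices) to the interior (resp. exterior) of the unit circle, with the extra requirement $g(\infty)=I$ for $LG^{\Sigma}_-$. $\widetilde G=\{g\in LG^{\Sigma}: g=g_+g_-^{-1},\ g_+\in LG^{\Sigma}_+,\ g_-\in LG^{\Sigma}_-\}$; the factors $g_\pm$ are unique. $L\mathfrak{g}^{\sigma^*}$ is the space of loops $X(z)=\sum_jX_jz^j$ with real $n\times n$ coefficients, $X_{2j}$ symmetric and $X_{2j+1}$ skew-symmetric. $\Pi_+$ (resp. $\Pi_-$) is the projection $\sum_jX_jz^j\mapsto\sum_{j\ge0}X_jz^j$ (resp. $\sum_{j<0}X_jz^j$). The coadjoint action of $g=g_+g_-^{-1}\in\widetilde G$ on $A\in L\mathfrak{g}^{\sigma^*}$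 is $\mathrm{Ad}^*_{\widetilde G}(g)A=\Pi_-(g_+^{-1}Ag_+)+\Pi_+(g_-^{-1}Ag_-)$. *)

(* Defs.v *)
From HB Require Import structures.
From mathcomp Require Import all_boot all_order all_algebra.
From mathcomp Require Import all_classical all_reals all_analysis.
Set Implicit Arguments. Unset Strict Implicit. Unset Printing Implicit Defensive.
Import Order.TTheory GRing.Theory Num.Theory.
Local Open Scope ring_scope.

(* A loop z |-> X(z) = sum_j X_j z^j on S^1 is represented by its Fourier
   coefficients j |-> X_j.  The reality condition conj(g z) = g(conj z) of LG
   (and the reality of the coefficients of Lg^{sigma*}) means exactly that the
   coefficients are real matrices. *)
Definition loop (R : realType) (n : nat) := int -> 'M[R]_n.

(* smoothness of the loop = rapid decay of the Fourier coefficients *)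
Definition smooth_loop (R : realType) (n : nat) (X : loop R n) : Prop :=
  forall k : nat, exists C : R, forall (j : int) (a b : 'I_n),
    `|(j%:~R : R)| ^+ k * `|X j a b| <= C.

Definition sumZ (R : realType) (u : int -> R) : R :=
  limn (fun N : nat => \sum_(0 <= l < N.*2.+1) u (l%:Z - N%:Z)).

(* pointwise product of loops = convolution of the coefficients *)
Definition lmul (R : realType) (n : nat) (X Y : loop R n) : loop R n :=
  fun k => \matrix_(a, b) sumZ (fun l => (X l *m Y (k - l)) a b).

Definition lone (R : realType) (n : nat) : loop R n :=
  fun k => if k == 0 then 1%:M else 0.

(* z |-> g(-z)^T *)
Definition lsigma (R : realType) (n : nat) (g : loop R n) : loop R n :=
  fun j => ((-1 : R) ^ j) *: (g j)^T.

Definition is_linv (R : realType) (n : nat) (g h : loop R n) : Prop :=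
  smooth_loop h /\ lmul g h = lone R n /\ lmul h g = lone R n.

(* LG : smooth loops into GL(n,C) with conj(g z) = g(conj z) *)
Definition LG (R : realType) (n : nat) (g : loop R n) : Prop :=
  smooth_loop g /\ exists h, is_linv g h.

Definition LGSigma (R : realType) (n : nat) (g : loop R n) : Prop :=
  LG g /\ lmul g (lsigma g) = lone R n.

(* LG^Sigma_+ : extends holomorphically, as invertible matrices, to |z| < 1 *)
Definition LGSigma_plus (R : realType) (n : nat) (g : loop R n) : Prop :=
  LGSigma g /\ (forall j : int, j < 0 -> g j = 0) /\
  exists h, is_linv g h /\ (forall j : int, j < 0 -> h j = 0).

(* LG^Sigma_- : extends holomorphically, as invertible matrices, to |z| > 1,
   with g(oo) = I *)
Definition LGSigma_minus (R : realType) (n : nat) (g : loop R n) : Prop :=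
  LGSigma g /\ (forall j : int, 0 < j -> g j = 0) /\ g 0 = 1%:M /\
  exists h, is_linv g h /\ (forall j : int, 0 < j -> h j = 0).

(* L g^{sigma*} : real coefficients, X_{2j} symmetric, X_{2j+1} skew *)
Definition Lgsigma_star (R : realType) (n : nat) (X : loop R n) : Prop :=
  smooth_loop X /\ forall j : int, (X j)^T = ((-1 : R) ^ j) *: X j.

Definition gstar_mp (R : realType) (n m p : nat) (X : loop R n) : Prop :=
  Lgsigma_star X /\ forall j : int, (j < - (m%:Z)) || (p%:Z < j) -> X j = 0.

(* Ad^*(g) A = Pi_-(g_+^{-1} A g_+) + Pi_+(g_-^{-1} A g_-), where
   g = g_+ g_-^{-1}, gpi = g_+^{-1}, gmi = g_-^{-1} *)
Definition Ad_star (R : realType) (n : nat) (gp gpi gm gmi A : loop R n)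
  : loop R n :=
  fun k => if k < 0 then lmul (lmul gpi A) gp k else lmul (lmul gmi A) gm k.

(* Main.v *)
Require Import Defs.
From HB Require Import structures.
From mathcomp Require Import all_boot all_order all_algebra.
From mathcomp Require Import all_classical all_reals all_analysis.
From mathcomp Require Import zify ring lra.
Import Order.TTheory GRing.Theory Num.Theory numFieldNormedType.Exports.
Local Open Scope ring_scope.
Set Implicit Arguments. Unset Strict Implicit. Unset Printing Implicit Defensive.

Section Win.
Variable V : zmodType.

Definition W (K : nat) (u : int -> V) : V :=
  \sum_(0 <= i < K.*2.+1) u (i%:Z - K%:Z).

Definition suppW (K : nat) (u : int -> V) :=
  forall j : int, (j < - (K%:Z)) || (K%:Z < j) -> u j = 0.

Lemma W_eq K u v : (forall j : int, - (K%:Z) <= j <= K%:Z -> u j = v j) ->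
  W K u = W K v.
Proof.
move=> h; rewrite /W; apply: eq_big_nat => i /andP[_ hi]; apply: h.
apply/andP; split; lia.
Qed.

Lemma WS K u : W K.+1 u = u (- (K.+1%:Z)) + W K u + u (K.+1%:Z).
Proof.
rewrite /W.
have -> : (K.+1).*2.+1 = (K.*2.+1).+2 by rewrite doubleS.
rewrite big_nat_recl // big_nat_recr //= addrA.
congr (_ + _ + _).
- congr u; lia.
- apply: eq_bigr => i _; congr u; lia.
- congr u; lia.
Qed.

Lemma W_ext K N u : suppW K u -> (K <= N)%N -> W N u = W K u.
Proof.
move=> hs; elim: N => [|N IH]; first by rewrite leqn0 => /eqP ->.
rewrite leq_eqVlt => /orP[/eqP <- //|]; rewrite ltnS => hKN.
rewrite WS IH // !hs ?add0r ?addr0 //; apply/orP; [right|left]; lia.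
Qed.

Lemma W_refl K u : W K (fun j => u (- j)) = W K u.
Proof.
rewrite /W big_nat_rev; apply: eq_big_nat => i /andP[_ hi]; congr u.
rewrite add0n; lia.
Qed.

Lemma W0 u : W 0 u = u 0.
Proof. by rewrite /W big_nat1 subr0. Qed.

Lemma suppW_mono K K' u : suppW K u -> (K <= K')%N -> suppW K' u.
Proof. move=> h hk j hj; apply: h; lia. Qed.

Lemma W_shift1 K0 K u : suppW K0 u -> (K0 < K)%N ->
  W K (fun j => u (j - 1)) = W K u.
Proof.
move=> hs hK.
have hs1 : suppW K0.+1 (fun j => u (j - 1)) by move=> j hj; apply: hs; lia.
rewrite (W_ext hs1 hK) (W_ext (suppW_mono hs (leqnSn K0)) hK) /W.
have -> : (K0.+1).*2.+1 = (K0.*2.+1).+2 by rewrite doubleS.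
rewrite big_nat_recl // [in RHS]big_nat_recr //= hs; last by apply/orP; left; lia.
rewrite [u (_ - _)]hs; last by apply/orP; right; lia.
rewrite add0r addr0; apply: eq_bigr => i _; congr u; lia.
Qed.

Lemma W_shiftn K0 K u (n : nat) : suppW K0 u -> (K0 + n <= K)%N ->
  W K (fun j => u (j - n%:Z)) = W K u.
Proof.
elim: n K0 u => [|n IH] K0 u hs hK.
  by apply: W_eq => j _; rewrite subr0.
have hsn : suppW (K0 + n) (fun j => u (j - n%:Z)) by move=> j hj; apply: hs; lia.
rewrite -(IH K0 u hs); last by lia.
rewrite -(@W_shift1 (K0 + n) K (fun j => u (j - n%:Z))) //; last by lia.
by apply: W_eq => j _; congr u; lia.
Qed.

Lemma W_shift K0 K u (l : int) : suppW K0 u -> (K0 + absz l <= K)%N ->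
  W K (fun j => u (j - l)) = W K u.
Proof.
case: l => n hs hK; first exact: W_shiftn hs hK.
have hs' : suppW K0 (fun j => u (- j)) by move=> j hj; apply: hs; lia.
rewrite -W_refl -[RHS]W_refl -(@W_shiftn K0 K (fun j => u (- j)) n.+1) //.
apply: W_eq => j _ /=; congr u; rewrite NegzE; lia.
Qed.

Lemma W_single K u (k : int) : (absz k <= K)%N ->
  (forall j, j != k -> u j = 0) -> W K u = u k.
Proof.
move=> hk h.
have hs : suppW 0 (fun j => u (j + k)).
  move=> j hj; apply: h; apply/negP => /eqP E; lia.
transitivity (W K (fun j => (fun j => u (j + k)) (j - k))).
  by apply: W_eq => j _ /=; congr u; lia.
rewrite (@W_shift 0 K (fun j => u (j + k)) k) //.
by rewrite (W_ext hs (leq0n K)) W0 add0r.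
Qed.

Lemma W_exch K K' (F : int -> int -> V) :
  W K (fun l => W K' (fun a => F l a)) = W K' (fun a => W K (fun l => F l a)).
Proof. by rewrite /W; apply: exchange_big. Qed.

Lemma W_zero K : W K (fun _ => 0) = 0.
Proof. by rewrite /W big1. Qed.

End Win.

Section Msum.
Variables (R : realType) (n : nat).
Implicit Types (u : int -> R) (U : int -> 'M[R]_n).

Lemma sumZE K u : suppW K u -> sumZ u = W K u.
Proof.
move=> hs; rewrite /sumZ; apply: lim_near_cst => //.
near=> N; change (W N u = W K u); apply: W_ext => //; near: N; exact: nbhs_infty_ge.
Unshelve. all: by end_near.
Qed.

Lemma sumZ_refl u : sumZ (fun j => u (- j)) = sumZ u.
Proof.
have E : (fun N => W N (fun j => u (- j))) = (fun N => W N u).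
  by apply: funext => N; exact: W_refl.
by rewrite /sumZ; move: E; rewrite /W => ->.
Qed.

Definition msum U : 'M[R]_n := \matrix_(a, b) sumZ (fun l => U l a b).

Lemma lmulE (X Y : loop R n) k : lmul X Y k = msum (fun l => X l *m Y (k - l)).
Proof. by []. Qed.

Lemma msum_eq U V : (forall j, U j = V j) -> msum U = msum V.
Proof. by move=> h; congr msum; apply: funext. Qed.

Lemma msumE K U : suppW K U -> msum U = W K U.
Proof.
move=> hs; apply/matrixP => a b; rewrite mxE /W summxE.
rewrite (@sumZE K); first by [].
by move=> j hj; rewrite hs // mxE.
Qed.

Lemma msum_refl U : msum (fun j => U (- j)) = msum U.
Proof. by apply/matrixP => a b; rewrite !mxE; exact: (sumZ_refl (fun l => U l a b)). Qed.

Lemma suppW_shift K0 U l : suppW K0 U -> suppW (K0 + absz l) (fun j => U (j - l)).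
Proof. move=> h j hj; apply: h; lia. Qed.

Lemma msum_shift K0 U l : suppW K0 U -> msum (fun j => U (j - l)) = msum U.
Proof.
move=> hs; rewrite (msumE (suppW_shift (l:=l) hs)).
rewrite (msumE (suppW_mono hs (leq_addr (absz l) K0))).
exact: W_shift hs (leqnn _).
Qed.

Lemma msum_rs K0 U k : suppW K0 U -> msum (fun j => U (k - j)) = msum U.
Proof.
move=> hs.
transitivity (msum (fun j => (fun j => U (j - (- k))) (- j))).
  by apply: msum_eq => j /=; congr U; lia.
by rewrite (msum_refl (fun j => U (j - - k))) (msum_shift _ hs).
Qed.

Lemma msum0 : msum (fun _ => 0) = 0.
Proof.
rewrite (@msumE 0) ?W0 //.
Qed.

Definition suppW2 K (F : int -> int -> 'M[R]_n) :=
  forall l a, [|| l < - (K%:Z), K%:Z < l, a < - (K%:Z) | K%:Z < a] -> F l a = 0.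

Lemma suppW2_in K F l : suppW2 K F -> suppW K (F l).
Proof. by move=> h a ha; apply: h; rewrite ha !orbT. Qed.

Lemma suppW2_out K F : suppW2 K F -> suppW K (fun l => msum (F l)).
Proof.
move=> h l hl; rewrite (msum_eq (V := fun _ => 0)) ?msum0 //.
by move=> a; apply: h; case/orP: hl => ->; rewrite ?orbT.
Qed.

Lemma suppW2_flip K F : suppW2 K F -> suppW2 K (fun a l => F l a).
Proof.
move=> h a l H; apply: h; move: H; case: (l < _); case: (_ < l); case: (a < _); case: (_ < a) => //.
Qed.

Lemma msum_exch K F : suppW2 K F ->
  msum (fun l => msum (F l)) = msum (fun a => msum (fun l => F l a)).
Proof.
move=> h.
rewrite (msumE (suppW2_out h)) (msumE (suppW2_out (suppW2_flip h))).
rewrite (W_eq (v := fun l => W K (F l))); last by move=> l _; rewrite (msumE (suppW2_in l h)).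
rewrite [RHS](W_eq (v := fun a => W K (fun l => F l a))); last first.
  by move=> a _; rewrite (msumE (suppW2_in a (suppW2_flip h))).
exact: W_exch.
Qed.

Lemma msum_tr U : (msum U)^T = msum (fun j => (U j)^T).
Proof. by apply/matrixP => a b; rewrite !mxE; congr sumZ; apply: funext => l; rewrite mxE. Qed.

Lemma msum_scale K c U : suppW K U -> msum (fun j => c *: U j) = c *: msum U.
Proof.
move=> hs; rewrite (msumE hs) (@msumE K); last by move=> j hj; rewrite hs ?scaler0.
by rewrite /W scaler_sumr.
Qed.

Lemma msum_mull K U (B : 'M[R]_n) : suppW K U -> msum U *m B = msum (fun j => U j *m B).
Proof.
move=> hs; rewrite (msumE hs) (@msumE K); last by move=> j hj; rewrite hs ?mul0mx.
by rewrite /W mulmx_suml.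
Qed.

End Msum.

Lemma step_ineq (R : realType) (y : R) : 1 <= y -> ((y+1)^+3)^-1 <= (y^+2)^-1 - ((y+1)^+2)^-1.
Proof.
move=> hy.
have y0 : 0 < y by lra.
have y10 : 0 < y + 1 by lra.
set a := y^-1; set b := (y+1)^-1.
have ha : a * y = 1 by rewrite mulVf // gt_eqF.
have hb : b * (y + 1) = 1 by rewrite mulVf // gt_eqF.
have b0 : 0 < b by rewrite invr_gt0.
have hab : b <= a by rewrite lef_pV2 ?posrE //; lra.
have hd : a - b = a * b.
  rewrite /a /b; field; rewrite !gt_eqF //.
rewrite -!exprVn -/a -/b.
nra.
Qed.

Section Tail.
Variable R : realType.

Lemma pointwise_bound (u : int -> R) t (l : int) (y : R) :
  (forall l : int, `|(l%:~R : R)| ^+ 3 * `|u l| <= t) ->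
  0 < y -> `|(l%:~R : R)| = y -> `|u l| <= t * (y ^+ 3)^-1.
Proof.
move=> hu y0 hl; have := hu l; rewrite hl => h.
rewrite mulrC ler_pdivlMl ?exprn_gt0 //.
Qed.

Lemma tail_bound (u : int -> R) t :
  (forall l : int, `|(l%:~R : R)| ^+ 3 * `|u l| <= t) ->
  forall N M, (1 <= N)%N -> (N <= M)%N ->
  `|W M u - W N u| <= 2 * t * ((N%:R ^+ 2)^-1 - (M%:R ^+ 2)^-1).
Proof.
move=> hu N M hN; elim: M => [|M IH]; first by move=> h; lia.
rewrite leq_eqVlt => /orP[/eqP <-|hNM]; first by rewrite !subrr normr0 mulr0.
rewrite ltnS in hNM; have {}IH := IH hNM.
have t0 : 0 <= t by have := hu 0; rewrite normr0 expr0n mul0r.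
have hM : (1 <= M%:R :> R) by rewrite ler1n; lia.
have y0 : (0 : R) < M%:R + 1 by lra.
have h1 : `|u (M.+1%:Z)| <= t * (((M%:R + 1) ^+ 3)^-1).
  apply: pointwise_bound => //.
  by rewrite [X in `|X|](_ : _ = M.+1%:R) // ger0_norm // -natr1.
have h2 : `|u (- M.+1%:Z)| <= t * (((M%:R + 1) ^+ 3)^-1).
  apply: pointwise_bound => //; rewrite mulrNz normrN.
  by rewrite [X in `|X|](_ : _ = M.+1%:R) // ger0_norm // -natr1.
have hs := step_ineq hM.
have e : W M.+1 u - W N u = (W M u - W N u) + u (- M.+1%:Z) + u (M.+1%:Z).
  by rewrite WS; ring.
rewrite e -[M.+1%:R]natr1.
apply: le_trans (ler_normD _ _) _.
apply: le_trans (lerD (ler_normD _ _) (lexx _)) _.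
have : t * ((M%:R + 1) ^+ 3)^-1 <= t * ((M%:R ^+ 2)^-1 - ((M%:R + 1) ^+ 2)^-1).
  by apply: ler_wpM2l.
move=> h3; lra.
Qed.

End Tail.

Section Lim.
Variable R : realType.

Lemma sumZ_near (u : int -> R) t :
  (forall l : int, `|(l%:~R : R)| ^+ 3 * `|u l| <= t) ->
  forall N, (1 <= N)%N -> `|sumZ u - W N u| <= 2 * t * (N%:R ^+ 2)^-1.
Proof.
move=> hu.
have t0 : 0 <= t by have := hu 0; rewrite normr0 expr0n mul0r.
have hc : forall N M, (1 <= N)%N -> (N <= M)%N -> `|W M u - W N u| <= 2 * t * (N%:R ^+ 2)^-1.
  move=> N M hN hNM; apply: le_trans (tail_bound hu hN hNM) _.
  rewrite ler_wpM2l ?mulr_ge0 // lerBlDr lerDl invr_ge0; exact: exprn_ge0.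
have cv : cvg ((fun M => (W M u : R)) @ \oo)%classic.
  apply: cauchy_cvg; apply: cauchy_exP => e e0.
  have hb := @archi_boundP _ (2 * t / e) (divr_ge0 (mulr_ge0 (ler0n _ 2) t0) (ltW e0)).
  set N := (Num.Def.archi_bound (2 * t / e)).+1.
  have hN : (1 <= N)%N by [].
  have hNe : 2 * t * (N%:R ^+ 2)^-1 < e.
    have N1 : (1 : R) <= N%:R by rewrite ler1n.
    have hN2 : (N%:R ^+ 2)^-1 <= (N%:R : R)^-1.
      rewrite lef_pV2 ?posrE ?exprn_gt0 ?(lt_le_trans ltr01) //.
      by rewrite expr2 ler_peMl // (le_trans ler01).
    apply: le_lt_trans (_ : 2 * t * (N%:R)^-1 < e).
      by rewrite ler_wpM2l // mulr_ge0.
    have h : 2 * t / e < N%:R by apply: lt_le_trans hb _; rewrite /N ler_nat.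
    rewrite ltr_pdivrMr // in h.
    rewrite ltr_pdivrMr ?(lt_le_trans ltr01) //; lra.
  exists (W N u); change (\forall M \near \oo%classic, ball (W N u : R) e (W M u)); near=> M.
  rewrite -ball_normE /ball_ /= distrC.
  apply: le_lt_trans hNe; apply: hc => //; near: M; exact: nbhs_infty_ge.
move=> N hN.
have E : sumZ u = lim ((fun M => (W M u : R)) @ \oo)%classic by [].
have h1 : W N u - 2 * t / N%:R ^+ 2 <= lim ((fun M => (W M u : R)) @ \oo)%classic.
  apply: limr_ge => //; near=> M.
  have := hc N M hN; rewrite ler_norml => /(_ _)/andP[] //; first by near: M; exact: nbhs_infty_ge.
  move=> ha hb; lra.
have h2 : lim ((fun M => (W M u : R)) @ \oo)%classic <= W N u + 2 * t / N%:R ^+ 2.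
  apply: limr_le => //; near=> M.
  have := hc N M hN; rewrite ler_norml => /(_ _)/andP[] //; first by near: M; exact: nbhs_infty_ge.
  move=> ha hb; lra.
rewrite E ler_norml; apply/andP; split; lra.
Unshelve. all: by end_near.
Qed.
End Lim.

Section Uniq.
Variables (R : realType) (n : nat).

Definition bnd (X : loop R n) C := forall j a b, `|X j a b| <= C.
Definition decay3 (X : loop R n) C :=
  forall (j : int) a b, `|(j%:~R : R)| ^+ 3 * `|X j a b| <= C.
Definition suppge0 (X : loop R n) := forall j : int, j < 0 -> X j = 0.

Lemma norm_sum_le (I : Type) (r : seq I) (F G : I -> R) :
  (forall i, `|F i| <= G i) -> `|\sum_(i <- r) F i| <= \sum_(i <- r) G i.
Proof.
move=> h; elim: r => [|x r IH]; first by rewrite !big_nil normr0.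
rewrite !big_cons; apply: le_trans (ler_normD _ _) _; exact: lerD.
Qed.

Lemma entry_mul_bound (A B : 'M[R]_n) cA cB a b :
  (forall i j, `|A i j| <= cA) -> (forall i j, `|B i j| <= cB) ->
  `|(A *m B) a b| <= n%:R * (cA * cB).
Proof.
move=> hA hB; rewrite mxE.
apply: le_trans (_ : _ <= \sum_(i < n) (cA * cB)) _.
  apply: norm_sum_le => i; rewrite [X in X <= _](normrM (A a i) (B i b)); apply: ler_pM => //.
by rewrite sumr_const card_ord mulr_natl.
Qed.

Lemma W_entry_bound K (U : int -> 'M[R]_n) c a b :
  (forall j, `|U j a b| <= c) -> `|W K U a b| <= (K.*2.+1)%:R * c.
Proof.
move=> h; rewrite /W summxE.
apply: le_trans (_ : _ <= \sum_(0 <= i < K.*2.+1) c) _.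
  by apply: norm_sum_le => i.
by rewrite sumr_const_nat subn0 mulr_natl.
Qed.

Lemma conv_decay X Y C CY (d : int) a b : decay3 X C -> bnd Y CY ->
  forall l : int, `|(l%:~R : R)| ^+ 3 * `|(X l *m Y (d - l)) a b| <= n%:R * (C * CY).
Proof.
move=> hX hY l.
have -> : `|(l%:~R : R)| ^+ 3 * `|(X l *m Y (d - l)) a b| =
          `|((l%:~R ^+ 3 *: X l) *m Y (d - l)) a b|.
  by rewrite -scalemxAl [in RHS]mxE -normrX -normrM.
apply: entry_mul_bound => i j; last exact: hY.
by rewrite mxE normrM normrX.
Qed.

Lemma zero_of_bound (d K' : R) (N0 : nat) :
  (forall N, (N0 <= N)%N -> (1 <= N)%N -> `|d| * N%:R <= K') -> d = 0.
Proof.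
move=> h; apply/eqP; apply/negPn/negP => hd.
have d0 : 0 < `|d| by rewrite normr_gt0.
have K0 : 0 <= K' by apply: le_trans (h (maxn N0 1) (leq_maxl _ _) (leq_maxr _ _)); rewrite mulr_ge0.
have hb := @archi_boundP _ (K' / `|d|) (divr_ge0 K0 (ltW d0)).
set B := Num.Def.archi_bound (K' / `|d|) in hb.
have := h (maxn N0 1 + B)%N (leq_trans (leq_maxl _ _) (leq_addr _ _))
  (leq_trans (leq_maxr _ _) (leq_addr _ _)).
have : K' / `|d| < (maxn N0 1 + B)%:R.
  by apply: lt_le_trans hb _; rewrite ler_nat leq_addl.
rewrite ltr_pdivrMr // => h1 h2; lra.
Qed.

End Uniq.

Section Uniq2.
Variables (R : realType) (n : nat).

Lemma lone_neq (k : int) : k != 0 -> lone R n k = 0.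
Proof. by rewrite /lone => /negPf ->. Qed.

Lemma lone0 : lone R n 0 = 1%:M.
Proof. by []. Qed.

Lemma inv_unique (X Y Z : loop R n) C CY CZ :
  decay3 X C -> bnd Y CY -> bnd Z CZ -> suppge0 Y -> suppge0 Z ->
  lmul X Y = lone R n -> lmul Y Z = lone R n -> X = Z.
Proof.
move=> hX hY hZ sY sZ hXY hYZ.
apply: funext => k; apply/matrixP => a b.
set t := n%:R * (C * CY).
pose P N c := W N (fun l => X l *m Y (c - l)).
have key : forall c N a' b', (1 <= N)%N ->
    `|lone R n c a' b' - P N c a' b'| <= 2 * t * (N%:R ^+ 2)^-1.
  move=> c N a' b' hN; rewrite -hXY lmulE mxE /P /W summxE.
  exact: (sumZ_near (conv_decay c a' b' hX hY) hN).
apply/eqP; rewrite -subr_eq0; apply/eqP.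
apply: (@zero_of_bound _ _ (7 * (n%:R * (2 * t * CZ))) (absz k)) => N hkN hN.
set M := (N.*2 + absz k)%N.
have ea : X k = W N (fun l => X l *m lone R n (k - l)).
  rewrite (@W_single _ N _ k) // ?subrr ?lone0 ?mulmx1 //.
  by move=> j hj; rewrite lone_neq ?mulmx0 // subr_eq0 eq_sym.
have eb : forall l : int, - (N%:Z) <= l <= N%:Z ->
    X l *m lone R n (k - l) = W M (fun c => (X l *m Y (c - l)) *m Z (k - c)).
  move=> l /andP[hl1 hl2].
  have hs : suppW (N + absz k) (fun b0 => Y b0 *m Z (k - l - b0)).
    move=> j /orP[hj|hj]; first by rewrite sY ?mul0mx //; lia.
    by rewrite sZ ?mulmx0 //; lia.
  rewrite -hYZ lmulE -(msum_shift l hs).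
  rewrite (@msumE _ _ M); last first.
    move=> j /orP[hj|hj]; first by rewrite sY ?mul0mx //; lia.
    by rewrite sZ ?mulmx0 //; lia.
  rewrite /W mulmx_sumr; apply: eq_bigr => i _; rewrite mulmxA; congr (_ *m Z _); lia.
have ec : X k = W M (fun c => P N c *m Z (k - c)).
  rewrite ea (W_eq eb) W_exch; apply: W_eq => c _; rewrite /P /W mulmx_suml //.
have ed : Z k = W M (fun c => lone R n c *m Z (k - c)).
  rewrite (@W_single _ M _ 0) // ?lone0 ?subr0 ?mul1mx //.
  by move=> j hj; rewrite lone_neq ?mul0mx.
have ee : Z k - X k = W M (fun c => (lone R n c - P N c) *m Z (k - c)).
  by rewrite ed ec /W -sumrB; apply: eq_bigr => i _; rewrite mulmxBl.
have hb : `|(Z k - X k) a b| <= M.*2.+1%:R * (n%:R * ((2 * t * (N%:R ^+ 2)^-1) * CZ)).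
  rewrite ee; apply: W_entry_bound => j; apply: entry_mul_bound => i i'.
    rewrite !mxE; exact: (key j N i i' hN).
  exact: hZ.
have -> : `|X k a b - Z k a b| = `|(Z k - X k) a b| by rewrite !mxE distrC.
have CY0 : 0 <= CY by apply: le_trans (hY 0 a b).
have CZ0 : 0 <= CZ by apply: le_trans (hZ 0 a b).
have C0 : 0 <= C by apply: le_trans (hX 0 a b); rewrite mulr_ge0.
have t0 : 0 <= t by rewrite /t !mulr_ge0.
have N0 : (N%:R : R) ^+ 2 != 0 by rewrite expf_neq0 // pnatr_eq0 -lt0n.
have hM7 : (M.*2.+1)%:R <= 7 * N%:R :> R.
  by rewrite -natrM ler_nat /M; lia.
set E := n%:R * (2 * t * (N%:R ^+ 2)^-1 * CZ) in hb.
have E0 : 0 <= E by rewrite /E !mulr_ge0 // invr_ge0 exprn_ge0.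
apply: le_trans (_ : (7 * N%:R * E) * N%:R <= _).
  apply: ler_wpM2r => //; apply: le_trans hb _; exact: ler_wpM2r.
have -> : 7 * N%:R * E * N%:R = 7 * (n%:R * (2 * t * CZ)) * (N%:R ^+ 2 * (N%:R ^+ 2)^-1) :> R.
  by rewrite /E; ring.
by rewrite mulfV // mulr1.
Qed.
End Uniq2.

Section Core.
Variables (R : realType) (n : nat).

Lemma sgnD (x y : int) : (-1 : R) ^ (x + y) = (-1) ^ x * (-1) ^ y.
Proof. by rewrite exprzDr // unitrN1. Qed.

Lemma sgn_pm (j : int) : (-1 : R) ^ j = 1 \/ (-1 : R) ^ j = -1.
Proof.
case: j => m.
  change ((-1 : R) ^+ m = 1 \/ (-1 : R) ^+ m = -1).
  by rewrite -signr_odd; case: (odd m); [right; rewrite expr1|left; rewrite expr0].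
change (((-1 : R) ^+ m.+1)^-1 = 1 \/ ((-1 : R) ^+ m.+1)^-1 = -1).
rewrite -signr_odd.
by case: (odd m.+1); [right; rewrite expr1 invrN1|left; rewrite expr0 invr1].
Qed.

Lemma sgn_sq (j : int) : (-1 : R) ^ j * (-1) ^ j = 1.
Proof. by case: (sgn_pm j) => ->; rewrite ?mulr1 ?mulrNN ?mulr1. Qed.

Lemma sgnN (j : int) : (-1 : R) ^ (- j) = (-1) ^ j.
Proof. by rewrite -exprz_inv invrN1. Qed.

Lemma core (Q A P : loop R n) (m p : nat) :
  suppge0 Q -> (forall j, P j = (-1) ^ j *: (Q j)^T) ->
  (forall j : int, (j < - (m%:Z)) || (p%:Z < j) -> A j = 0) ->
  (forall j, (A j)^T = (-1) ^ j *: A j) ->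
  forall k, (k < - (m%:Z) -> lmul (lmul P A) Q k = 0) /\
  ((lmul (lmul P A) Q k)^T = (-1) ^ k *: lmul (lmul P A) Q k).
Proof.
move=> sQ hP sA symA k.
have sP : suppge0 P by move=> j hj; rewrite hP sQ // trmx0 scaler0.
pose F l a := P a *m A (l - a) *m Q (k - l).
have Fz : forall l a, (a < 0) || (l - a < - (m%:Z)) || (k - l < 0) -> F l a = 0.
  move=> l a /orP[/orP[h|h]|h]; rewrite /F.
  - by rewrite sP // !mul0mx.
  - by rewrite (sA (l - a)) ?mulmx0 ?mul0mx // h.
  - by rewrite sQ // mulmx0.
have rep : lmul (lmul P A) Q k = msum (fun l => msum (F l)).
  rewrite lmulE; apply: msum_eq => l; rewrite lmulE (@msum_mull _ _ (absz l + m)).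
    by [].
  move=> j hj; rewrite (_ : P j *m A (l - j) = 0) ?mul0mx //.
  case/orP: hj => hj; first by rewrite sP ?mul0mx //; lia.
  by rewrite (sA (l - j)) ?mulmx0 //; apply/orP; left; lia.
have sF : suppW2 (m + absz k) F.
  by move=> l a h; apply: Fz; lia.
split.
  move=> hk; rewrite rep (msum_eq (V := fun _ => 0)) ?msum0 // => l.
  by rewrite (msum_eq (V := fun _ => 0)) ?msum0 // => a; apply: Fz; lia.
have Ftr : forall l a, (F l a)^T = (-1) ^ k *: F (k - a) (k - l).
  move=> l a; rewrite /F !trmx_mul.
  have e1 : (Q (k - l))^T = (-1) ^ (k - l) *: P (k - l).
    by rewrite hP scalerA sgn_sq scale1r.
  have e2 : (P a)^T = (-1) ^ a *: Q a by rewrite hP linearZ /= trmxK.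
  rewrite e1 e2 symA (_ : k - a - (k - l) = l - a); last by lia.
  rewrite (_ : k - (k - a) = a); last by lia.
  rewrite -!scalemxAl -!scalemxAr !scalerA -!sgnD mulmxA.
  by congr (_ ^ _ *: _); lia.
pose G l a := F (k - a) (k - l).
have sG : suppW2 (m + absz k + absz k) G.
  by move=> l a h; apply: Fz; lia.
rewrite rep msum_tr.
rewrite (msum_eq (V := fun l => (-1) ^ k *: msum (G l))); last first.
  move=> l; rewrite msum_tr -(msum_scale _ (suppW2_in l sG)).
  by apply: msum_eq => a; rewrite Ftr.
rewrite (msum_scale _ (suppW2_out sG)); congr (_ *: _).
rewrite (msum_exch sG).
rewrite (msum_eq (V := fun a => msum (F (k - a)))); last first.
  move=> a; rewrite /G.
  exact: (msum_rs k (suppW2_in (k - a) sF)).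
exact: (msum_rs k (suppW2_out sF)).
Qed.

End Core.

Section Rev.
Variables (R : realType) (n : nat).

Definition rev (X : loop R n) : loop R n := fun j => X (- j).

Lemma lmul_rev (X Y : loop R n) : lmul (rev X) (rev Y) = rev (lmul X Y).
Proof.
apply: funext => k; rewrite /rev !lmulE.
rewrite -[RHS](msum_refl (fun l => X l *m Y (- k - l))).
by apply: msum_eq => l; congr (_ *m Y _); lia.
Qed.

Lemma lone_rev : rev (lone R n) = lone R n.
Proof. by apply: funext => j; rewrite /rev /lone oppr_eq0. Qed.

Lemma decay3_rev (X : loop R n) C : decay3 X C -> decay3 (rev X) C.
Proof. by move=> h j a b; rewrite /rev -[j]opprK mulrNz normrN opprK; apply: h. Qed.

Lemma bnd_rev (X : loop R n) C : bnd X C -> bnd (rev X) C.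
Proof. by move=> h j a b; apply: h. Qed.

Lemma inv_unique_minus (X Y Z : loop R n) C CY CZ :
  decay3 X C -> bnd Y CY -> bnd Z CZ ->
  (forall j : int, 0 < j -> Y j = 0) -> (forall j : int, 0 < j -> Z j = 0) ->
  lmul X Y = lone R n -> lmul Y Z = lone R n -> X = Z.
Proof.
move=> hX hY hZ sY sZ hXY hYZ.
have E : rev X = rev Z.
  apply: (inv_unique (decay3_rev hX) (bnd_rev hY) (bnd_rev hZ)).
  - by move=> j hj; rewrite /rev sY // oppr_gt0.
  - by move=> j hj; rewrite /rev sZ // oppr_gt0.
  - by rewrite lmul_rev hXY lone_rev.
  - by rewrite lmul_rev hYZ lone_rev.
apply: funext => j; have := congr1 (fun f => f (- j)) E; by rewrite /rev opprK.
Qed.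

Lemma le_bigsum (I : finType) (F : I -> R) i : (forall j, 0 <= F j) -> F i <= \sum_j F j.
Proof. by move=> h; rewrite (bigD1 i) //= lerDl sumr_ge0. Qed.

Lemma le_W (u : int -> R) K (j : int) : (forall i, 0 <= u i) ->
  - (K%:Z) <= j <= K%:Z -> u j <= W K u.
Proof.
move=> h hj.
have -> : W K u = W K (fun i => if i == j then u i else 0) + W K (fun i => if i == j then 0 else u i).
  by rewrite /W -big_split /=; apply: eq_bigr => i _; case: ifP => _; rewrite ?addr0 ?add0r.
rewrite (@W_single _ K _ j); first by rewrite eqxx lerDl /W sumr_ge0 // => i _; case: ifP => _.
  lia.
by move=> i /negPf ->.
Qed.

Lemma W_ge0 (u : int -> R) K : (forall i, 0 <= u i) -> 0 <= W K u.
Proof. by move=> h; rewrite /W sumr_ge0. Qed.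

Lemma smooth_fin (X : loop R n) (m p : nat) :
  (forall j : int, (j < - (m%:Z)) || (p%:Z < j) -> X j = 0) -> smooth_loop X.
Proof.
move=> h k.
pose u := fun j : int => \sum_a \sum_b `|(j%:~R : R)| ^+ k * `|X j a b|.
have u0 : forall j, 0 <= u j.
  move=> j; apply: sumr_ge0 => a' _; apply: sumr_ge0 => b' _; apply: mulr_ge0 => //; exact: exprn_ge0.
exists (W (m + p) u) => j a b.
case hj: ((j < - (m%:Z)) || (p%:Z < j)).
  by rewrite h // mxE normr0 mulr0 W_ge0.
have hjK : - ((m + p)%:Z) <= j <= (m + p)%:Z by lia.
apply: le_trans _ (le_W u0 hjK).
have h1 : forall a', 0 <= \sum_b `|(j%:~R : R)| ^+ k * `|X j a' b|.
  by move=> a'; apply: sumr_ge0 => b' _; apply: mulr_ge0 => //; exact: exprn_ge0.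
apply: le_trans _ (le_bigsum a h1).
apply: (le_bigsum (F := fun b => `|(j%:~R : R)| ^+ k * `|X j a b|)) => i.
apply: mulr_ge0 => //; exact: exprn_ge0.
Qed.

End Rev.

Lemma sgn_norm (R : realType) (j : int) : `|(-1 : R) ^ j| = 1.
Proof. by case: (sgn_pm R j) => ->; rewrite ?normrN normr1. Qed.

Lemma bnd_sigma (R : realType) n (X : loop R n) C : bnd X C -> bnd (lsigma X) C.
Proof. by move=> h j a b; rewrite /lsigma !mxE normrM sgn_norm mul1r. Qed.

Lemma smooth_bnd (R : realType) n (X : loop R n) : smooth_loop X -> exists C, bnd X C.
Proof.
move=> h; have [C hC] := h 0%N; exists C => j a b.
by have := hC j a b; rewrite expr0 mul1r.
Qed.

Unset Implicit Arguments.
Set Strict Implicit.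

Theorem proposition3p2 (R : realType) (n m p : nat) (hp : (1 <= p)%N)
  (g gp gpi gm gmi : loop R n) :
  LGSigma_plus gp -> LGSigma_minus gm ->
  is_linv gp gpi -> is_linv gm gmi ->
  g = lmul gp gmi ->
  forall A : loop R n, gstar_mp m p A ->
  gstar_mp m p (Ad_star gp gpi gm gmi A).
Proof.
move=> [[[smP _] sigP] [s0P _]] [[[smM _] sigM] [s0M _]] [smPi [_ hPiP]] [smMi [_ hMiM]] _.
move=> A [[smA symA] sA].
have [CP hCP] := smooth_bnd smP.
have [CM hCM] := smooth_bnd smM.
have [C1 hC1] := smPi 3%N.
have [C2 hC2] := smMi 3%N.
have e1 : gpi = lsigma gp.
  apply: (@inv_unique _ _ _ _ _ C1 CP CP) => //.
  - exact: bnd_sigma.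
  - by move=> j hj; rewrite /lsigma s0P // trmx0 scaler0.
have e2 : gmi = lsigma gm.
  apply: (@inv_unique_minus _ _ _ _ _ C2 CM CM) => //.
  - exact: bnd_sigma.
  - by move=> j hj; rewrite /lsigma s0M // trmx0 scaler0.
pose T1 := lmul (lmul gpi A) gp.
pose T2 := lmul (lmul (rev gmi) (rev A)) (rev gm).
have hP1 : forall j, gpi j = (-1) ^ j *: (gp j)^T by move=> j; rewrite e1.
have hc1 := @core R n gp A gpi m p s0P hP1 sA symA.
have hc2 := @core R n (rev gm) (rev A) (rev gmi) p m.
have hc2' : forall k, (k < - (p%:Z) -> T2 k = 0) /\ ((T2 k)^T = (-1) ^ k *: T2 k).
  apply: hc2.
  - by move=> j hj; rewrite /rev s0M // oppr_gt0.
  - by move=> j; rewrite /rev e2 /lsigma sgnN.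
  - by move=> j hj; rewrite /rev sA //; lia.
  - by move=> j; rewrite /rev symA sgnN.
have eT2 : forall k, lmul (lmul gmi A) gm k = T2 (- k).
  move=> k; rewrite /T2 !lmul_rev /rev opprK //.
have van : forall j : int, (j < - (m%:Z)) || (p%:Z < j) -> Ad_star gp gpi gm gmi A j = 0.
  move=> j /orP[hj|hj]; rewrite /Ad_star.
    rewrite ifT; last by lia.
    by case: (hc1 j) => ->.
  rewrite ifF; last by lia.
  by rewrite eT2; case: (hc2' (- j)) => -> //; lia.
split; last exact: van.
split; first exact: smooth_fin van.
move=> j; rewrite /Ad_star; case: ifP => hj.
  by case: (hc1 j).
by rewrite eT2; case: (hc2' (- j)) => _ ->; rewrite sgnN.
Qed.
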